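(* Let $k$ and $n$ be positive integers with $n\geq 4^k$. Let $H_{k,n}$ be the $n$-vertex graph consisting of a clique $K_k$ together with $n-k$ isolated vertices, and let $G_{k,n}$ be the $(n+1)$-vertex graph obtained from $H_{k,n}$ by adding a new vertex adjacent to all $n$ vertices of $H_{k,n}$. Then $r(G_{k,n}) > nk$.
   Context: For a graph $F$, the Ramsey number $r(F)$ is the minimum $N$ such that every two-coloring of the edges of $K_N$ contains a monochromatic copy of $F$. *)

(* Defs.v *)
From mathcomp Require Import all_boot.
Set Implicit Arguments. Unset Strict Implicit. Unset Printing Implicit Defensive.

Definition simple_graph (V : finType) (F : rel V) : Prop :=
  (forall u v, F u v = F v u) /\ (forall u, F u u = false).

(* Every two-colouring of the edges of K_N (a symmetric colouring
   c : 'I_N -> 'I_N -> bool; diagonal values are irrelevant) contains a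
   monochromatic copy of F: an injective vertex map f with all edges of F
   sent to edges of colour b. *)
Definition ramsey_prop (V : finType) (F : rel V) (N : nat) : Prop :=
  forall c : 'I_N -> 'I_N -> bool, (forall x y, c x y = c y x) ->
  exists (b : bool) (f : V -> 'I_N),
    injective f /\ forall u v, F u v -> c (f u) (f v) = b.

Definition Hkn (k n : nat) : rel 'I_n :=
  fun i j => [&& i != j, (i < k)%N & (j < k)%N].
Arguments Hkn k n : clear implicits.

(* G_{k,n}: vertices option 'I_n, None is the new apex vertex adjacent
   to all n vertices of H_{k,n}. *)
Definition Gkn (k n : nat) : rel (option 'I_n) :=
  fun x y => match x, y with
             | Some i, Some j => Hkn k n i j
             | Some _, None | None, Some _ => true
             | None, None => false
             end.
Arguments Gkn k n : clear implicits.

(* Main.v *)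
Require Import Defs.
From mathcomp Require Import all_boot.

Lemma noinj_opt m (g : option 'I_m -> 'I_m) : injective g -> False.
Proof. by move/leq_card; rewrite card_option card_ord ltnn. Qed.

Theorem lemma2p2 (k n : nat) :
  (0 < k)%N -> (0 < n)%N -> (4 ^ k <= n)%N ->
  forall N : nat, ramsey_prop (Gkn k n) N -> (n * k < N)%N.
Proof.
move=> k0 n0 kn N HR; rewrite ltnNge; apply/negP => HN.
have [b [f [finj Hf]]] := HR (fun x y => (x %/ n == y %/ n)) (fun x y => eq_sym _ _).
case: b Hf => Hf.
- have Hq : forall x, f x %/ n = f None %/ n.
    by case=> [i|] //; apply/eqP; rewrite eq_sym; apply: (Hf None (Some i)).
  pose g := fun x => Ordinal (ltn_pmod (f x) n0).
  apply: (@noinj_opt n g) => x y /(congr1 val) /= Hm.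
  apply: finj; apply: val_inj.
  by rewrite [LHS](divn_eq (f x) n) [RHS](divn_eq (f y) n) Hm !Hq.
- have Hkn' : (k <= n)%N by apply: leq_trans (ltnW (ltn_expl k (isT : 1 < 4)%N)) kn.
  pose h : 'I_k -> 'I_n := widen_ord Hkn'.
  have Hlt : forall x, (f (omap h x) %/ n < k)%N.
    move=> x; rewrite ltn_divLR // mulnC.
    exact: leq_trans (ltn_ord _) HN.
  pose g := fun x => Ordinal (Hlt x).
  apply: (@noinj_opt k g) => x y /(congr1 val) /= /eqP E.
  case: x y E => [i|] [j|] E //.
  + case: (eqVneq i j) => [-> //|ne].
    have := Hf (Some (h i)) (Some (h j)).
    rewrite /= E => H; suff /H : Gkn k n (Some (h i)) (Some (h j)) by [].
    rewrite /Gkn /Hkn /h /= !ltn_ord !andbT.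
    by apply/eqP => /(congr1 val) /= /val_inj; apply/eqP.
  + by have := Hf (Some (h i)) None isT; rewrite /= E.
  + by have := Hf None (Some (h j)) isT; rewrite /= E.
Qed.
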